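(* Let $p\in[0,1]^N$. If $i\in\{\tilde k+1,\dots,N\}$, then $B^{\mathcal N}_{1:i}\le i-1$. In particular, if $\tilde k\le N-1$, then $B^{\mathcal N}_{1:\tilde k+1}=\tilde k$.
   Context: $q\in(0,1)$, $N\ge1$. Bins $B_i=\{x:(i-1)q/N\le x<iq/N\}$ for $i=1,\dots,N$. $B^{\mathcal N}_{1:i}=|\{j\in\{1,\dots,N\}:0\le p_j<iq/N\}|$ (with $B^{\mathcal N}_{1:0}=0$), and $\tilde k=\max\{i\in\{0,\dots,N\}:B^{\mathcal N}_{1:i}=i\}$ is the Benjamini–Hochberg rejection count. *)

(* Defs.v *)
From mathcomp Require Import all_boot all_order all_algebra.
Set Implicit Arguments. Unset Strict Implicit. Unset Printing Implicit Defensive.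
Import Order.TTheory GRing.Theory Num.Theory.
Local Open Scope ring_scope.

Definition Bcount (R : realFieldType) (N : nat) (q : R) (p : 'I_N -> R) (i : nat) : nat :=
  #|[set j : 'I_N | (0 <= p j) && (p j < i%:R * q / N%:R)]|.

(* k~ = max { i in {0..N} : B^N_{1:i} = i }  (i = 0 always qualifies) *)
Definition ktilde (R : realFieldType) (N : nat) (q : R) (p : 'I_N -> R) : nat :=
  (\max_(i < N.+1 | Bcount q p i == i) i)%N.

(* Main.v *)
Require Import Defs.
From mathcomp Require Import all_boot all_order all_algebra.
Import Order.TTheory GRing.Theory Num.Theory.
Local Open Scope ring_scope.

Lemma Bmono (R : realFieldType) (N : nat) (q : R) (p : 'I_N -> R) i i' :
  0 <= q -> (i <= i')%N -> (Bcount q p i <= Bcount q p i')%N.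
Proof.
move=> q0 ii; apply: subset_leq_card; apply/subsetP => j.
rewrite !inE => /andP[-> h] /=.
apply: (lt_le_trans h).
apply: ler_wpM2r; first by rewrite invr_ge0 ler0n.
by apply: ler_wpM2r => //; rewrite ler_nat.
Qed.

Lemma Ble (R : realFieldType) (N : nat) (q : R) (p : 'I_N -> R) i :
  (Bcount q p i <= N)%N.
Proof. by rewrite /Bcount -[X in (_ <= X)%N](card_ord N) max_card. Qed.

Lemma B0 (R : realFieldType) (N : nat) (q : R) (p : 'I_N -> R) :
  Bcount q p 0 = 0%N.
Proof.
rewrite /Bcount; apply/eqP; rewrite cards_eq0; apply/eqP/setP => j.
rewrite !inE mul0r mul0r; case: (leP 0 (p j)) => //= h.
Qed.

Theorem lemma3 (R : realFieldType) (N : nat) (q : R) (p : 'I_N -> R) :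
  (0 < q < 1) -> (1 <= N)%N ->
  (forall j, 0 <= p j <= 1) ->
  (forall i : nat, (ktilde q p < i <= N)%N -> (Bcount q p i <= i.-1)%N) /\
  ((ktilde q p <= N.-1)%N -> Bcount q p (ktilde q p).+1 = ktilde q p).
Proof.
move=> /andP[q0 _] N1 _.
have q0' : 0 <= q by apply: ltW.
have notfix : forall i, (ktilde q p < i <= N)%N -> Bcount q p i != i.
  move=> i /andP[ki iN]; apply/negP => /eqP e.
  have := @leq_bigmax_cond _ (fun i : 'I_N.+1 => Bcount q p i == i)
     (fun i : 'I_N.+1 => nat_of_ord i) (Ordinal (n:=N.+1) (m:=i) iN).
  rewrite /= e eqxx => /(_ isT) h.
  by move: ki; rewrite /ktilde ltnNge h.
have P1 : forall i : nat, (ktilde q p < i <= N)%N -> (Bcount q p i <= i.-1)%N.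
  move=> i /andP[ki iN].
  rewrite leqNgt; apply/negP => hi.
  have hi' : (i < Bcount q p i)%N.
    rewrite ltn_neqAle eq_sym notfix ?ki ?iN //=.
    by move: hi; case: i {ki iN} => //.
  have : forall d, (i + d <= N)%N -> (i + d < Bcount q p (i + d))%N.
    elim=> [|d IH]; first by rewrite addn0.
    move=> h.
    have h1 : (i + d < Bcount q p (i + d.+1))%N.
      have h2 : (i + d <= N)%N by apply: leq_trans h; rewrite addnS.
      have m : (Bcount q p (i + d) <= Bcount q p (i + d.+1))%N.
        by apply: Bmono => //; rewrite addnS.
      exact: leq_trans (IH h2) m.
    rewrite ltn_neqAle eq_sym notfix ?h ?andbT; last first.
      by apply: leq_trans ki _; rewrite leq_addr.
    by move: h1; rewrite addnS.
  move/(_ (N - i)%N); rewrite subnKC // leqnn => /(_ isT).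
  by rewrite ltnNge Ble.
split=> // kN.
have ltk : (ktilde q p < (ktilde q p).+1 <= N)%N.
  rewrite ltnSn /=; move: kN N1; generalize (ktilde q p) => k; clear; case: (N) => //.
have fk : Bcount q p (ktilde q p) = ktilde q p.
  have [|i0 Pi0 e] := @eq_bigmax_cond 'I_N.+1 (fun i : 'I_N.+1 => Bcount q p i == i)
      (fun i : 'I_N.+1 => nat_of_ord i).
    by apply/card_gt0P; exists ord0; rewrite unfold_in /= B0.
  have -> : ktilde q p = i0 by exact: e.
  by apply/eqP; rewrite unfold_in in Pi0.
apply/eqP; rewrite eqn_leq; apply/andP; split.
  by have := P1 _ ltk.
by rewrite -{1}fk; apply: Bmono => //.
Qed.
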